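(* There exists a countable abelian group $A$ of torsion-free rank $1$ such that $IAut(A)$ contains a subgroup $\Sigma\cong\prod_p\mathbb{Z}(p)$ with $\Sigma\cap FAut(A)=T(\Sigma)\cong\bigoplus_p\mathbb{Z}(p)$, where $p$ ranges over all primes.
   Context: Abelian groups are written additively. An automorphism $\varphi$ of $A$ is inertial if $(\varphi(X)+X)/X$ is finite for every subgroup $X\le A$; $IAut(A)$ is the subgroup of $\mathrm{Aut}(A)$ generated by the inertial automorphisms. $FAut(A)$ is the group of automorphisms acting as the identity on some subgroup of finite index of $A$. $T(\Sigma)$ denotes the set of elements of finite order of the abelian group $\Sigma$, and $\mathbb{Z}(p)$ is the cyclic group of order $p$. *)

(* Defs.v *)
From HB Require Import structures.
From mathcomp Require Import all_boot all_order all_algebra.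
Set Implicit Arguments. Unset Strict Implicit. Unset Printing Implicit Defensive.
Import GRing.Theory.
Local Open Scope ring_scope.

Section Defs.
Variable A : zmodType.

Definition countable_group : Prop := exists h : A -> nat, injective h.

Definition tf_rank1 : Prop :=
  exists a : A, (forall n : nat, (0 < n)%N -> a *+ n != 0) /\
    forall x : A, exists n m : int, n != 0 /\ x *~ n = a *~ m.

Definition is_subgroup (X : A -> Prop) : Prop :=
  X 0 /\ (forall x y, X x -> X y -> X (x - y)).

Definition is_aut (f : A -> A) : Prop :=
  (forall x y, f (x + y) = f x + f y) /\ bijective f.

(* (S + X)/X is finite, for S a set containing X-cosets representatives:
   finitely many cosets of X meet S *)
Definition finite_mod (S X : A -> Prop) : Prop :=
  exists l : seq A, forall y, S y -> exists2 z, z \in l & X (y - z).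

Definition img_plus (phi : A -> A) (X : A -> Prop) : A -> Prop :=
  fun y => exists x x', X x /\ X x' /\ y = phi x + x'.

Definition inertial (phi : A -> A) : Prop :=
  is_aut phi /\
  forall X, is_subgroup X -> finite_mod (img_plus phi X) X.

Inductive IAut_gen : (A -> A) -> Prop :=
| IA_id : IAut_gen id
| IA_mul phi g : inertial phi -> IAut_gen g -> IAut_gen (phi \o g)
| IA_mulV phi psi g : inertial phi -> cancel phi psi -> cancel psi phi ->
    IAut_gen g -> IAut_gen (psi \o g).

Definition in_IAut (f : A -> A) : Prop := exists2 g, IAut_gen g & g =1 f.

Definition in_FAut (f : A -> A) : Prop :=
  is_aut f /\ exists B : A -> Prop, is_subgroup B /\
    finite_mod (fun _ => True) B /\ forall b, B b -> f b = b.

End Defs.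

Definition primes_t := {p : nat | prime p}.
Definition Pz := forall p : primes_t, 'Z_(sval p).
Definition Pz_add (s t : Pz) : Pz := fun p => s p + t p.
Definition Pz_has_finite_order (s : Pz) : Prop :=
  exists2 n : nat, (0 < n)%N & forall p, s p *+ n = 0.
(* membership in the direct sum bigoplus_p Z(p) (finite support) *)
Definition Pz_fin_supp (s : Pz) : Prop :=
  exists N : nat, forall p : primes_t, (N < sval p)%N -> s p = 0.

(* Main.v *)
Require Import Defs.
From HB Require Import structures.
From mathcomp Require Import all_boot all_order all_algebra.
Set Implicit Arguments. Unset Strict Implicit. Unset Printing Implicit Defensive.
Import Order.TTheory GRing.Theory Num.Theory.
Local Open Scope ring_scope.

Definition mn (i : nat) : nat := if prime i then (i * i)%N else 1%N.
Definition mz (i : nat) : int := (mn i)%:Z.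

Lemma mn_gt0 i : (0 < mn i)%N.
Proof. by rewrite /mn; case: ifP => // /prime_gt0 h; rewrite muln_gt0 h. Qed.
Lemma mz_gt0 i : 0 < mz i.
Proof. by rewrite /mz ltz_nat mn_gt0. Qed.

Definition wfb (s : seq int) : bool :=
  all (fun i => (0 <= nth 0 s i) && (nth 0 s i < mz i)) (iota 0 (size s))
  && (last 1 s != 0).

Fixpoint trim (s : seq int) : seq int :=
  if s is x :: s' then
    (let t := trim s' in if (t == [::]) && (x == 0) then [::] else x :: t)
  else [::].

Lemma nth_trim s i : nth 0 (trim s) i = nth 0 s i.
Proof.
elim: s i => [|x s IH] i //=.
case: (trim s =P [::]) IH => [e|_] IH /=; case: (x =P 0) => [x0|_] /=;
  by case: i => [|i] //=; rewrite -IH ?e ?x0 //= nth_nil.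
Qed.

Lemma last_trim s : last 1 (trim s) != 0.
Proof.
elim: s => [|x s IH] //=.
case e: (trim s) IH => [|y t] /= IH.
  by case: (x =P 0) => [|/eqP].
by [].
Qed.

Lemma size_trim s : (size (trim s) <= size s)%N.
Proof.
elim: s => [|x s IH] //=.
by case: ifP => //= _; rewrite ltnS.
Qed.

Lemma wfb_trim s : (forall i, 0 <= nth 0 s i < mz i) -> wfb (trim s).
Proof.
move=> h; rewrite /wfb last_trim andbT.
apply/allP => i _; rewrite nth_trim; exact: h.
Qed.

Record T := MkT { tval : seq int; tvalP : wfb tval }.
HB.instance Definition _ := [isSub for tval].
HB.instance Definition _ := [Countable of T by <:].

Definition get (x : T) (i : nat) : int := nth 0 (tval x) i.

Lemma get_range x i : 0 <= get x i < mz i.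
Proof.
rewrite /get; case: x => s /= /andP[/allP h _].
case: (ltnP i (size s)) => hi.
  by apply: h; rewrite mem_iota.
by rewrite nth_default // lexx mz_gt0.
Qed.

Lemma get_default x i : (size (tval x) <= i)%N -> get x i = 0.
Proof. by move=> h; rewrite /get nth_default. Qed.

Lemma size_le (s t : seq int) : last 1 t != 0 ->
  (forall i, nth 0 s i = nth 0 t i) -> (size t <= size s)%N.
Proof.
case/lastP: t => [|t a] //; rewrite last_rcons size_rcons => a0 h.
rewrite leqNgt; apply/negP => hs.
have := h (size t); rewrite nth_rcons ltnn eqxx nth_default //.
by move=> e; rewrite -e eqxx in a0.
Qed.

Lemma getK x y : (forall i, get x i = get y i) -> x = y.
Proof.
move=> h; apply: val_inj => /=.
case: x y h => s hs [t ht] /= h; rewrite /get /= in h.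
move: hs ht => /andP[_ ls] /andP[_ lt].
have e : size s = size t.
  by apply/eqP; rewrite eqn_leq !size_le // => i; rewrite h.
by apply: (eq_from_nth (x0 := 0)) e _ => i _; rewrite h.
Qed.

Definition mkT (f : nat -> int) (n : nat) : T.
Proof.
refine (@MkT (trim (mkseq (fun i => f i %% mz i)%Z n)) _).
apply: wfb_trim => i.
case: (ltnP i n) => hi.
  by rewrite nth_mkseq // modz_ge0 ?ltz_pmod ?mz_gt0 // gt_eqF ?mz_gt0.
by rewrite nth_default ?size_mkseq // lexx mz_gt0.
Defined.

Lemma get_mkT f n i : get (mkT f n) i = if (i < n)%N then (f i %% mz i)%Z else 0.
Proof.
rewrite /get /= nth_trim; case: ltnP => hi; first by rewrite nth_mkseq.
by rewrite nth_default ?size_mkseq.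
Qed.

Lemma modz_get x i : (get x i %% mz i)%Z = get x i.
Proof. by rewrite modz_small // get_range. Qed.

Definition zeroT := mkT (fun _ => 0) 0.
Definition addT x y := mkT (fun i => get x i + get y i) (maxn (size (tval x)) (size (tval y))).
Definition oppT x := mkT (fun i => - get x i) (size (tval x)).

Lemma get0 i : get zeroT i = 0.
Proof. by rewrite get_mkT. Qed.

Lemma get_add x y i : get (addT x y) i = ((get x i + get y i) %% mz i)%Z.
Proof.
rewrite get_mkT; case: ltnP => // h.
rewrite !get_default ?addr0 ?mod0z //.
  by apply: leq_trans h; rewrite leq_maxr.
by apply: leq_trans h; rewrite leq_maxl.
Qed.

Lemma get_opp x i : get (oppT x) i = ((- get x i) %% mz i)%Z.
Proof.
rewrite get_mkT; case: ltnP => // h.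
by rewrite !get_default ?oppr0 ?mod0z.
Qed.

Lemma addTA : associative addT.
Proof.
move=> x y z; apply: getK => i; rewrite !get_add.
by rewrite modzDml modzDmr addrA.
Qed.
Lemma addTC : commutative addT.
Proof. by move=> x y; apply: getK => i; rewrite !get_add addrC. Qed.
Lemma add0T : left_id zeroT addT.
Proof. by move=> x; apply: getK => i; rewrite get_add get0 add0r modz_get. Qed.
Lemma addNT : left_inverse zeroT oppT addT.
Proof.
by move=> x; apply: getK => i; rewrite get_add get_opp get0 modzDml addNr mod0z.
Qed.

HB.instance Definition _ := GRing.isZmodule.Build T addTA addTC add0T addNT.

Lemma getD (x y : T) i : get (x + y) i = ((get x i + get y i) %% mz i)%Z.
Proof. exact: get_add. Qed.
Lemma getN (x : T) i : get (- x) i = ((- get x i) %% mz i)%Z.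
Proof. exact: get_opp. Qed.
Lemma getZ i : get (0 : T) i = 0.
Proof. exact: get0. Qed.
Lemma getB (x y : T) i : get (x - y) i = ((get x i - get y i) %% mz i)%Z.
Proof. by rewrite getD getN modzDmr. Qed.
Lemma getMn (x : T) n i : get (x *+ n) i = ((get x i * n%:Z) %% mz i)%Z.
Proof.
elim: n => [|n IH]; first by rewrite mulr0n getZ mulr0 mod0z.
by rewrite mulrS getD IH modzDmr -[in RHS]addn1 PoszD mulrDr mulr1 addrC.
Qed.
Lemma valZpD (p : primes_t) (x y : 'Z_(sval p)) : val (x + y) = ((val x + val y) %% sval p)%N.
Proof. case: p x y => [p pp] x y /=. by congr (_ %% _)%N; rewrite Zp_cast // prime_gt1. Qed.
Lemma valZpMn (p : primes_t) (x : 'Z_(sval p)) n : val (x *+ n) = ((val x * n) %% sval p)%N.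
Proof. case: p x => [p pp] x /=. rewrite Zp_mulrn /=. by congr (_ %% _)%N; rewrite Zp_cast // prime_gt1. Qed.
Lemma valZp_lt (p : primes_t) (x : 'Z_(sval p)) : (val x < sval p)%N.
Proof. case: p x => [p pp] x /=. have := ltn_ord x; move: (nat_of_ord x) => n. by rewrite Zp_cast // prime_gt1. Qed.
From mathcomp Require Import zify ring.
From Stdlib Require Import Classical.

Definition sp (s : Pz) (i : nat) : nat :=
  if (insub i : option primes_t) is Some p then val (s p) else 0%N.

Lemma sp_val s (p : primes_t) : sp s (sval p) = val (s p).
Proof. by rewrite /sp valK. Qed.

Lemma sp_lt s i : prime i -> (sp s i < i)%N.
Proof. move=> pi; rewrite /sp insubT /=; exact: (valZp_lt (s (exist _ i pi))). Qed.

Definition cn (s : Pz) (i : nat) : nat := (1 + sp s i * i)%N.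

Lemma cn_add s t i : cn (Pz_add s t) i = (cn t i * cn s i)%N %[mod mn i].
Proof.
rewrite /mn; case: ifP => pi; last by rewrite !modn1.
rewrite /cn /sp insubT /Pz_add valZpD /=.
move: (nat_of_ord (s (Sub i pi))) (nat_of_ord (t (Sub i pi))) => x y.
have e := divn_eq (x + y) i.
move: ((x + y) %/ i)%N ((x + y) %% i)%N e => q r e.
have -> : ((1 + y * i) * (1 + x * i) = (q + x * y) * (i * i) + (1 + r * i))%N.
  have -> : ((1 + y * i) * (1 + x * i) = 1 + (x + y) * i + x * y * (i * i))%N by ring.
  rewrite e; ring.
by rewrite modnMDl.
Qed.

Definition act (s : Pz) (t : T) : T :=
  mkT (fun i => get t i * (cn s i)%:Z) (size (tval t)).

Lemma get_act s t i : get (act s t) i = ((get t i * (cn s i)%:Z) %% mz i)%Z.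
Proof.
rewrite get_mkT; case: ltnP => // h.
by rewrite get_default ?mul0r ?mod0z.
Qed.

Lemma act_add s x y : act s (x + y) = act s x + act s y.
Proof.
apply: getK => i; rewrite getD !get_act getD.
by rewrite modzMml modzDml modzDmr mulrDl.
Qed.

Lemma act_comp s t x : act (Pz_add s t) x = act s (act t x).
Proof.
apply: getK => i; rewrite !get_act modzMml -mulrA.
rewrite -[LHS]modzMmr -[RHS]modzMmr; congr ((_ * _) %% _)%Z.
by rewrite /mz -PoszM !modz_nat cn_add.
Qed.

Lemma act_ext s t : (forall p, s p = t p) -> forall x, act s x = act t x.
Proof.
move=> h x; apply: getK => i; rewrite !get_act /cn /sp.
by case: (insub i) => // p; rewrite h.
Qed.

Lemma act_id s : (forall p, s p = 0) -> forall x, act s x = x.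
Proof.
move=> h x; apply: getK => i; rewrite get_act /cn /sp.
case: (insub i) => [p|]; first by rewrite h /= mulr1 modz_get.
by rewrite /= mulr1 modz_get.
Qed.

Definition Pzopp (s : Pz) : Pz := fun p => - s p.

Lemma actK s : cancel (act s) (act (Pzopp s)).
Proof.
move=> x; rewrite -act_comp act_id // => p.
by rewrite /Pz_add /Pzopp addNr.
Qed.

Lemma actKV s : cancel (act (Pzopp s)) (act s).
Proof.
move=> x; rewrite -act_comp act_id // => p.
by rewrite /Pz_add /Pzopp addrN.
Qed.

Definition AA := (int * T)%type.

Definition fA (s : Pz) (x : AA) : AA := (x.1, act s x.2).

Lemma fA_aut s : is_aut (fA s).
Proof.
split.
  by move=> [a b] [c d]; rewrite /fA /= act_add.
exists (fA (Pzopp s)) => [[a b]|[a b]]; rewrite /fA /=.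
  by rewrite actK.
by rewrite actKV.
Qed.

Lemma fA_hom s t x : fA (Pz_add s t) x = fA s (fA t x).
Proof. by rewrite /fA /= act_comp. Qed.

Definition ep (p : nat) : T := mkT (fun i => ((i == p) : nat)%:Z) p.+1.

Lemma cn_lt s p : prime p -> (cn s p < mn p)%N.
Proof.
move=> pp; rewrite /cn /mn pp; have := sp_lt s pp; have := prime_gt1 pp.
move: (sp s p) => x; nia.
Qed.

Lemma fA_inj s t : fA s =1 fA t -> forall p, s p = t p.
Proof.
move=> h [p pp].
have e : act s (ep p) = act t (ep p) := congr1 snd (h (0, ep p)).
have := congr1 (get^~ p) e; rewrite !get_act get_mkT ltnSn eqxx /= !modzMml !mul1r.
rewrite /mz !modz_nat !modn_small ?cn_lt // => -[].
rewrite /cn => /eqP; rewrite eqn_add2l eqn_mul2r gtn_eqF ?prime_gt0 //=.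
have -> := sp_val s (exist _ p pp); have -> := sp_val t (exist _ p pp).
by move/eqP => e'; apply: val_inj.
Qed.

Lemma val0Zp (p : primes_t) : val (0 : 'Z_(sval p)) = 0%N.
Proof. by []. Qed.

Lemma fo_fs s : Pz_has_finite_order s <-> Pz_fin_supp s.
Proof.
split.
  move=> [n n0 h]; exists n => p np; apply: val_inj; rewrite val0Zp.
  have := congr1 val (h p); rewrite valZpMn val0Zp => /eqP.
  rewrite -/(dvdn _ _) Gauss_dvdl.
    move=> d; apply/eqP; rewrite -leqn0 leqNgt; apply/negP => x0.
    by have := dvdn_leq x0 d; rewrite leqNgt valZp_lt.
  rewrite prime_coprime ?(svalP p) //; apply/negP => d.
  by have := dvdn_leq n0 d; rewrite leqNgt np.
move=> [N h]; exists N`!; first exact: fact_gt0.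
move=> p; case: (ltnP N (sval p)) => hp; first by rewrite h // mul0rn.
apply: val_inj; rewrite valZpMn val0Zp; apply/eqP.
rewrite -/(dvdn _ _); apply: dvdn_mull; apply: dvdn_fact.
by rewrite prime_gt0 ?(svalP p).
Qed.

Lemma countable_AA : countable_group AA.
Proof. exists pickle; exact: (pcan_inj pickleK). Qed.

Lemma pair_mulrn (x : AA) n : x *+ n = (x.1 *+ n, x.2 *+ n).
Proof.
elim: n => [|n IH]; first by rewrite !mulr0n.
by rewrite !mulrS IH.
Qed.

Lemma pair_mulrz (x : AA) z : x *~ z = (x.1 *~ z, x.2 *~ z).
Proof. by case: z => n; rewrite ?NegzE ?mulrNz -!pmulrn pair_mulrn. Qed.

Fixpoint Mn (N : nat) : nat := if N is k.+1 then (Mn k * mn k)%N else 1%N.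

Lemma Mn_gt0 N : (0 < Mn N)%N.
Proof. by elim: N => //= k IH; rewrite muln_gt0 IH mn_gt0. Qed.

Lemma dvd_Mn i N : (i < N)%N -> (mn i %| Mn N)%N.
Proof.
elim: N => // k IH; rewrite ltnS leq_eqVlt => /orP[/eqP ->|h] /=.
  exact: dvdn_mull.
by apply: dvdn_mulr; apply: IH.
Qed.

Lemma torsT (t : T) : t *+ Mn (size (tval t)) = 0.
Proof.
apply: getK => i; rewrite getMn getZ.
case: (ltnP i (size (tval t))) => h; last by rewrite get_default // mul0r mod0z.
apply/dvdz_mod0P; apply: dvdz_mull; rewrite dvdzE /=; exact: dvd_Mn.
Qed.

Lemma tf_AA : tf_rank1 AA.
Proof.
exists (1, 0); split.
  move=> n n0; rewrite pair_mulrn /=; apply/negP => /eqP [] /eqP.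
  by rewrite pnatr_eq0 gtn_eqF.
move=> [n t]; exists (Mn (size (tval t)))%:Z, (n * (Mn (size (tval t)))%:Z); split.
  by rewrite eqz_nat gtn_eqF ?Mn_gt0.
rewrite !pair_mulrz /= mul0rz intz; congr (_, _).
  by rewrite mulrzz.
by rewrite -pmulrn torsT.
Qed.

Lemma mn_prime p : prime p -> mn p = (p * p)%N.
Proof. by rewrite /mn => ->. Qed.

Lemma faut_fs s : in_FAut (fA s) -> Pz_fin_supp s.
Proof.
move=> [_ [B [[B0 Bsub] [[l hl] hfix]]]].
exists (\max_(z <- l) size (tval z.2)) => -[p pp] /= hp.
have [z zl hB] := hl ((0, ep p) : AA) I.
have e : act s (ep p - z.2) = ep p - z.2 := congr1 snd (hfix _ hB).
have zs : (size (tval z.2) <= p)%N.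
  apply: leq_trans (ltnW hp); exact: (leq_bigmax_seq (P := xpredT) (F := fun z : AA => size (tval z.2)) z zl).
have := congr1 (get^~ p) e; rewrite get_act !getB get_mkT ltnSn eqxx /=.
rewrite get_default // subr0 modzMml modz_mod /mz !modz_nat.
have m1 : (1 < mn p)%N by rewrite mn_prime //; have := prime_gt1 pp; nia.
rewrite (modn_small m1) mul1n modn_small ?cn_lt // => -[].
rewrite /cn => e1; have /eqP : (sp s p * p = 0)%N by lia.
rewrite muln_eq0 (gtn_eqF (prime_gt0 pp)) orbF.
rewrite (sp_val s (exist _ p pp)) => /eqP h; apply: val_inj; exact: h.
Qed.

Definition emb N M (g : {ffun 'I_N.+1 -> 'I_M}) : T :=
  mkT (fun i => (val (g (inord i)) : nat)%:Z) N.+1.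

Lemma fs_faut s : Pz_fin_supp s -> in_FAut (fA s).
Proof.
move=> [N h]; split; first exact: fA_aut.
exists (fun x : AA => forall i, (i <= N)%N -> get x.2 i = 0); split; [split|split].
- by move=> i _; rewrite getZ.
- by move=> x y hx hy i hi; rewrite getB hx ?hy // subr0 mod0z.
- exists [seq ((0, emb g) : AA) | g <- enum {ffun 'I_N.+1 -> 'I_(N * N).+1}].
  move=> [n t] _.
  exists ((0, emb [ffun j : 'I_N.+1 => (inord `|get t j|%N : 'I_(N * N).+1)]) : AA).
    by apply: map_f; rewrite mem_enum.
  move=> i hi /=; rewrite getB get_mkT ltnS hi ffunE /= (@inordK N i) ?ltnS // inordK.
    by rewrite gez0_abs ?modz_get ?subrr ?mod0z //; case/andP: (get_range t i).
  have /andP[g0 g1] := get_range t i.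
  have : (`|get t i| < mn i)%N by rewrite -ltz_nat gez0_abs.
  move=> lt; apply: (leq_trans lt).
  rewrite /mn; case: ifP => // _; apply: leqW; exact: leq_mul.
- move=> [n t] hb; rewrite /fA /=; congr (_, _).
  apply: getK => i; rewrite get_act.
  case: (leqP i N) => hi; first by rewrite hb // mul0r mod0z.
  rewrite -modzMmr /mz modz_nat.
  have -> : (cn s i %% mn i = 1 %% mn i)%N.
    rewrite /mn /cn; case: ifP => pi; last by rewrite !modn1.
    by rewrite (sp_val s (exist _ i pi)) h //= val0Zp.
  by rewrite -modz_nat modzMmr mulr1 modz_get.
Qed.

Lemma coprime_Mn N : prime N -> forall k, (k <= N)%N -> coprime (Mn k) (mn N).
Proof.
move=> pN; elim=> [|k IH] hk /=; first by rewrite coprime1n.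
rewrite coprimeMl IH ?(ltnW hk) //=.
rewrite /mn pN; case: ifP => pk; last by rewrite coprime1n.
rewrite !coprimeMl !coprimeMr andbb prime_coprime // dvdn_prime2 //.
by rewrite ltn_eqF.
Qed.

Lemma crt N (c : nat -> nat) : exists U : nat, forall i, (i < N)%N -> U = c i %[mod mn i].
Proof.
elim: N => [|N [U hU]]; first by exists 0%N.
case pN: (prime N); last first.
  exists U => i; rewrite ltnS leq_eqVlt => /orP[/eqP ->|]; last exact: hU.
  by rewrite /mn pN !modn1.
have cp := coprime_Mn pN (leqnn N).
exists (chinese (Mn N) (mn N) U (c N)) => i; rewrite ltnS leq_eqVlt => /orP[/eqP ->|hi].
  exact: chinese_modr.
rewrite -(modn_dvdm _ (dvd_Mn hi)) chinese_modl // modn_dvdm ?dvd_Mn //; exact: hU.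
Qed.

Lemma ex_min (P : nat -> Prop) : (exists n, P n) -> exists n, P n /\ forall m, P m -> (n <= m)%N.
Proof.
move=> [n Pn]; elim/ltn_ind: n Pn => n IH Pn.
case: (classic (exists m, P m /\ (m < n)%N)) => [[m [Pm lt]]|nm].
  exact: IH lt Pm.
exists n; split => // m Pm; rewrite leqNgt; apply/negP => lt; apply: nm; exists m; split.
  exact: Pm.
exact: lt.
Qed.

Lemma addf_mulrz (U V : zmodType) (h : U -> V) :
  (forall a b, h (a + b) = h a + h b) -> forall a z, h (a *~ z) = h a *~ z.
Proof.
move=> hD.
have h0 : h 0 = 0 by apply: (@addrI _ (h 0)); rewrite -hD !addr0.
have hN a : h (- a) = - h a by apply: (@addrI _ (h a)); rewrite -hD !subrr.
have hn a n : h (a *+ n) = h a *+ n.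
  by elim: n => [|n IH]; rewrite ?mulr0n // !mulrS hD IH.
move=> a [n|n]; first by rewrite -!pmulrn hn.
by rewrite !NegzE !mulrNz -!pmulrn hN hn.
Qed.

Section Sub.
Variable X : AA -> Prop.
Hypothesis hX : is_subgroup X.

Lemma XN x : X x -> X (- x).
Proof. by case: hX => h0 hB hx; rewrite -sub0r; apply: hB. Qed.
Lemma XD x y : X x -> X y -> X (x + y).
Proof. by case: hX => h0 hB hx hy; rewrite -[y]opprK; apply: hB => //; apply: XN. Qed.
Lemma XB x y : X x -> X y -> X (x - y).
Proof. by case: hX => h0 hB; apply: hB. Qed.
Lemma Xmn x n : X x -> X (x *+ n).
Proof.
case: hX => h0 _ hx; elim: n => [|n IH]; first by rewrite mulr0n.
by rewrite mulrS; apply: XD.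
Qed.

Lemma Xmz x z : X x -> X (x *~ z).
Proof.
move=> hx; case: z => n; first by rewrite -pmulrn; apply: Xmn.
by rewrite NegzE mulrNz -pmulrn; apply: XN; apply: Xmn.
Qed.

Lemma keyA s y : X (0, y) -> X (fA s (0, y) - (0, y)).
Proof.
move=> hy.
have [U hU] := crt (size (tval y)) (fun i => sp s i * i)%N.
suff -> : fA s (0, y) - (0, y) = (0, y) *+ U by apply: Xmn.
rewrite pair_mulrn /fA /=.
have -> : ((0, act s y) - (0, y) : AA) = (0 - 0, act s y - y) by [].
rewrite mul0rn subrr; congr (_, _).
apply: getK => i; rewrite getB get_act getMn modzDml.
case: (ltnP i (size (tval y))) => hi; last by rewrite get_default // !mul0r subr0 mod0z.
rewrite /cn PoszD mulrDr mulr1 addrAC subrr add0r.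
rewrite -modzMmr -[RHS]modzMmr /mz !modz_nat (hU i hi) //.
Qed.
End Sub.

Lemma fA_inertial s : inertial (fA s).
Proof.
split; first exact: fA_aut.
move=> X hX.
pose g := fun x : AA => fA s x - x.
have gD : forall a b, g (a + b) = g a + g b.
  by move=> a b; rewrite /g (fA_aut s).1 opprD addrACA.
have img y : img_plus (fA s) X y -> exists x x', [/\ X x, X x' & y = g x + (x + x')].
  move=> [x [x' [hx [hx' ->]]]]; exists x, x'; split => //.
  by rewrite /g addrA subrK.
have cancel3 : forall a b c : AA, (a + b) + c - a = b + c.
  by move=> a b c; rewrite addrAC [a + b]addrC addrK.
case: (classic (exists x, X x /\ x.1 != 0)) => [[x1 [hx1 nz]]|none]; last first.
  exists [:: 0] => y /img [x [x' [hx hx' ->]]].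
  exists 0; first by rewrite mem_seq1.
  rewrite subr0; apply: XD => //; last exact: XD.
  have e : x = (0, x.2).
    case: x hx => a b hx /=; congr (_, _).
    by apply/eqP; apply/negP => /negP h; apply: none; exists (a, b).
  by rewrite e; apply: (keyA hX); rewrite -e.
pose P n := (0 < n)%N /\ exists x, X x /\ x.1 = n%:Z.
have [n0 [[n0pos [x0 [hx0 e0]]] hmin]] : exists n, P n /\ forall m, P m -> (n <= m)%N.
  apply: ex_min; case: x1 hx1 nz => [[n|n] b] hx1 nz /=.
    exists n; split; first by rewrite lt0n; apply: contra nz => /eqP ->.
    by exists (n%:Z, b).
  exists n.+1; split => //; exists (- (Negz n, b)); split; first exact: XN.
  by rewrite /= NegzE opprK.
pose w := g x0.
pose D := Mn (size (tval w.2)).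
have w1 : w.1 = 0 by rewrite /w /g /= subrr.
have wD : w *+ D = 0.
  rewrite pair_mulrn w1 mul0rn /D torsT; by [].
exists [seq w *+ k | k <- iota 0 D] => y /img [x [x' [hx hx' ->]]].
pose q := (x.1 %/ n0%:Z)%Z.
have hy0 : X (x - x0 *~ q) by apply: XB => //; apply: Xmz.
have e1 : (x - x0 *~ q).1 = 0.
  have -> : (x - x0 *~ q).1 = x.1 - x0.1 *~ q by rewrite pair_mulrz.
  rewrite e0 mulrzz mulrC.
  have ed := divz_eq x.1 n0%:Z.
  have hr0 : 0 <= (x.1 %% n0%:Z)%Z by rewrite modz_ge0 // eqz_nat -lt0n.
  have hr1 : (x.1 %% n0%:Z < n0%:Z)%Z by rewrite ltz_pmod // ltz_nat.
  have -> : x.1 - q * n0 = (x.1 %% n0%:Z)%Z.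
    by rewrite {1}ed /q addrAC subrr add0r.
  case: ((x.1 %% n0%:Z)%Z =P 0) => // /eqP rnz.
  have : P `|(x.1 %% n0%:Z)%Z|%N.
    split; first by rewrite absz_gt0.
    exists (x - x0 *~ q); split => //.
    by rewrite gez0_abs // pair_mulrz /= e0 mulrzz mulrC {1}ed /q addrAC subrr add0r.
  move/hmin; rewrite -lez_nat gez0_abs // => h.
  by have := lt_le_trans hr1 h; rewrite ltxx.
have ey : x - x0 *~ q = (0, (x - x0 *~ q).2).
  by rewrite -e1; case: (x - x0 *~ q).
have gx : g x = w *~ q + g (x - x0 *~ q).
  by rewrite -(addf_mulrz gD) -gD addrC subrK.
have hD0 : (0 < D)%N by rewrite /D Mn_gt0.
have kq : w *~ q = w *+ `|(q %% D%:Z)%Z|%N.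
  rewrite {1}(divz_eq q D%:Z) mulrzDr mulrC mulrzA -pmulrn wD mul0rz add0r.
  by rewrite pmulrn gez0_abs // modz_ge0 // eqz_nat -lt0n.
exists (w *+ `|(q %% D%:Z)%Z|%N).
  apply: map_f; rewrite mem_iota add0n -ltz_nat gez0_abs.
    by rewrite ltz_pmod // ltz_nat.
  by rewrite modz_ge0 // eqz_nat -lt0n.
rewrite gx kq cancel3; apply: XD => //; last exact: XD.
by rewrite ey; apply: (keyA hX); rewrite -ey.
Qed.

Theorem propositionA :
  exists A : zmodType, countable_group A /\ tf_rank1 A /\
  exists f : Pz -> A -> A,
    (forall s, is_aut (f s)) /\
    (forall s t x, f (Pz_add s t) x = f s (f t x)) /\
    (forall s t, f s =1 f t -> forall p, s p = t p) /\
    (forall s, in_IAut (f s)) /\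
    (forall s, in_FAut (f s) <-> Pz_has_finite_order s) /\
    (forall s, Pz_has_finite_order s <-> Pz_fin_supp s).
Proof.
exists AA; split; first exact: countable_AA.
split; first exact: tf_AA.
exists fA; split; first exact: fA_aut.
split; first exact: fA_hom.
split; first exact: fA_inj.
split.
  move=> s; exists (fA s \o id) => //.
  exact: IA_mul (fA_inertial s) (IA_id _).
split; last exact: fo_fs.
move=> s; split => h.
  by apply/fo_fs; apply: faut_fs.
by apply: fs_faut; apply/fo_fs.
Qed.
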